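(* Let $A\bowtie^{\theta} I$ be an amalgamated Banach algebra as in the context. If $A$ and $I$ are weakly amenable, then $A\bowtie^{\theta} I$ is weakly amenable.
   Context: Let $A$ and $B$ be Banach algebras, $\theta:A\to B$ a continuous algebra homomorphism with $\|\theta\|\le 1$, and $I$ a closed two-sided ideal of $B$. The amalgamated Banach algebra $A\bowtie^{\theta} I$ is the Banach space $\{(a,i): a\in A,\ i\in I\}$ with norm $\|(a,i)\|=\|a\|+\|i\|$ and product $(a,i)\cdot(a',i')=(aa',\ \theta(a)i'+i\theta(a')+ii')$. A Banach algebra $C$ is weakly amenable if every bounded derivation $D:C\to C^*$ (i.e. bounded linear with $D(ab)=a\cdot D(b)+D(a)\cdot b$, where $\langle a\cdot f,b\rangle=f(ba)$, $\langle f\cdot a,b\rangle=f(ab)$) is inner, i.e. of the form $D(a)=a\cdot f-f\cdot a$ for some $f\in C^*$. *)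

(* Defs.v *)
From Stdlib Require Import Reals.
Open Scope R_scope.

Record Cplx := mkC { Cre : R; Cim : R }.
Definition C0 : Cplx := mkC 0 0.
Definition C1 : Cplx := mkC 1 0.
Definition Cadd (z w : Cplx) : Cplx := mkC (Cre z + Cre w) (Cim z + Cim w).
Definition Copp (z : Cplx) : Cplx := mkC (- Cre z) (- Cim z).
Definition Csub (z w : Cplx) : Cplx := Cadd z (Copp w).
Definition Cmul (z w : Cplx) : Cplx :=
  mkC (Cre z * Cre w - Cim z * Cim w) (Cre z * Cim w + Cim z * Cre w).
Definition Cabs (z : Cplx) : R := sqrt (Cre z * Cre z + Cim z * Cim z).

Record BanachAlgebra := {
  ba_car :> Type;
  ba_zero : ba_car;
  ba_add : ba_car -> ba_car -> ba_car;
  ba_opp : ba_car -> ba_car;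
  ba_scal : Cplx -> ba_car -> ba_car;
  ba_mul : ba_car -> ba_car -> ba_car;
  ba_norm : ba_car -> R;
  ba_addA : forall x y z, ba_add x (ba_add y z) = ba_add (ba_add x y) z;
  ba_addC : forall x y, ba_add x y = ba_add y x;
  ba_add0 : forall x, ba_add ba_zero x = x;
  ba_addN : forall x, ba_add x (ba_opp x) = ba_zero;
  ba_scalDr : forall c x y, ba_scal c (ba_add x y) = ba_add (ba_scal c x) (ba_scal c y);
  ba_scalDl : forall c d x, ba_scal (Cadd c d) x = ba_add (ba_scal c x) (ba_scal d x);
  ba_scalA : forall c d x, ba_scal (Cmul c d) x = ba_scal c (ba_scal d x);
  ba_scal1 : forall x, ba_scal C1 x = x;
  ba_mulA : forall x y z, ba_mul x (ba_mul y z) = ba_mul (ba_mul x y) z;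
  ba_mulDl : forall x y z, ba_mul (ba_add x y) z = ba_add (ba_mul x z) (ba_mul y z);
  ba_mulDr : forall x y z, ba_mul x (ba_add y z) = ba_add (ba_mul x y) (ba_mul x z);
  ba_scal_mull : forall c x y, ba_scal c (ba_mul x y) = ba_mul (ba_scal c x) y;
  ba_scal_mulr : forall c x y, ba_scal c (ba_mul x y) = ba_mul x (ba_scal c y);
  ba_norm_ge0 : forall x, 0 <= ba_norm x;
  ba_norm_eq0 : forall x, ba_norm x = 0 -> x = ba_zero;
  ba_norm_triangle : forall x y, ba_norm (ba_add x y) <= ba_norm x + ba_norm y;
  ba_norm_scal : forall c x, ba_norm (ba_scal c x) = Cabs c * ba_norm x;
  ba_norm_mul : forall x y, ba_norm (ba_mul x y) <= ba_norm x * ba_norm y;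
  ba_complete : forall u : nat -> ba_car,
    (forall eps, 0 < eps -> exists N, forall n m, (N <= n)%nat -> (N <= m)%nat ->
        ba_norm (ba_add (u n) (ba_opp (u m))) < eps) ->
    exists l, forall eps, 0 < eps -> exists N, forall n, (N <= n)%nat ->
        ba_norm (ba_add (u n) (ba_opp l)) < eps
}.

Arguments ba_zero {_}. Arguments ba_add {_}. Arguments ba_opp {_}.
Arguments ba_scal {_}. Arguments ba_mul {_}. Arguments ba_norm {_}.

(** * Weak amenability, relative to a (sub)space given by a predicate P.
   The Banach algebra is the set {x | P x} with the given operations;
   a functional on it is represented by any function X -> Cplx, only its
   values on P matter.  Elements of the dual act by
   <a.f, b> = f(ba),  <f.a, b> = f(ab).                                      *)
Section WA.
Context {X : Type} (add : X -> X -> X) (scal : Cplx -> X -> X)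
  (mul : X -> X -> X) (norm : X -> R) (P : X -> Prop).

Definition bounded_functional_on (f : X -> Cplx) : Prop :=
  (forall x y, P x -> P y -> f (add x y) = Cadd (f x) (f y)) /\
  (forall c x, P x -> f (scal c x) = Cmul c (f x)) /\
  (exists M, forall x, P x -> Cabs (f x) <= M * norm x).

(* D : C -> C^*, written curried: D a b = <D(a), b> *)
Definition bounded_derivation_on (D : X -> X -> Cplx) : Prop :=
  (forall a, P a -> bounded_functional_on (D a)) /\
  (forall a a' b, P a -> P a' -> P b -> D (add a a') b = Cadd (D a b) (D a' b)) /\
  (forall c a b, P a -> P b -> D (scal c a) b = Cmul c (D a b)) /\
  (exists M, forall a b, P a -> P b -> Cabs (D a b) <= M * norm a * norm b) /\
  (* D(ab) = a.D(b) + D(a).b *)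
  (forall a b c, P a -> P b -> P c ->
     D (mul a b) c = Cadd (D b (mul c a)) (D a (mul b c))).

(* D(a) = a.f - f.a *)
Definition inner_on (D : X -> X -> Cplx) : Prop :=
  exists f, bounded_functional_on f /\
    forall a b, P a -> P b -> D a b = Csub (f (mul b a)) (f (mul a b)).

Definition weakly_amenable_on : Prop :=
  forall D, bounded_derivation_on D -> inner_on D.
End WA.

Definition weakly_amenable (A : BanachAlgebra) : Prop :=
  weakly_amenable_on (@ba_add A) (@ba_scal A) (@ba_mul A) (@ba_norm A)
    (fun _ => True).

Definition contractive_hom (A B : BanachAlgebra) (theta : A -> B) : Prop :=
  (forall x y, theta (ba_add x y) = ba_add (theta x) (theta y)) /\
  (forall c x, theta (ba_scal c x) = ba_scal c (theta x)) /\
  (forall x y, theta (ba_mul x y) = ba_mul (theta x) (theta y)) /\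
  (forall x, ba_norm (theta x) <= ba_norm x).

Definition closed_ideal (B : BanachAlgebra) (I : B -> Prop) : Prop :=
  I ba_zero /\
  (forall x y, I x -> I y -> I (ba_add x y)) /\
  (forall c x, I x -> I (ba_scal c x)) /\
  (forall b x, I x -> I (ba_mul b x)) /\
  (forall b x, I x -> I (ba_mul x b)) /\
  (forall (u : nat -> B) l, (forall n, I (u n)) ->
     (forall eps, 0 < eps -> exists N, forall n, (N <= n)%nat ->
        ba_norm (ba_add (u n) (ba_opp l)) < eps) -> I l).

(** * The amalgamated algebra A ⋈^theta I, as the subset {(a,i) | i ∈ I} of A × B *)
Section Amal.
Context {A B : BanachAlgebra} (theta : A -> B).
Definition amal_add (x y : A * B) : A * B :=
  (ba_add (fst x) (fst y), ba_add (snd x) (snd y)).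
Definition amal_scal (c : Cplx) (x : A * B) : A * B :=
  (ba_scal c (fst x), ba_scal c (snd x)).
Definition amal_mul (x y : A * B) : A * B :=
  (ba_mul (fst x) (fst y),
   ba_add (ba_add (ba_mul (theta (fst x)) (snd y)) (ba_mul (snd x) (theta (fst y))))
          (ba_mul (snd x) (snd y))).
Definition amal_norm (x : A * B) : R := ba_norm (fst x) + ba_norm (snd x).
End Amal.

(* Main.v *)
Require Import Defs.
From Stdlib Require Import Reals Lra Psatz.
Open Scope R_scope.

Lemma Cext z w : Cre z = Cre w -> Cim z = Cim w -> z = w.
Proof. destruct z, w; simpl; intros; subst; reflexivity. Qed.

Ltac cring := apply Cext; unfold Csub, Cadd, Copp, Cmul, C0, C1; simpl; ring.

Lemma Cabs_ge0 z : 0 <= Cabs z.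
Proof. apply sqrt_pos. Qed.

Lemma Cabs_mul z w : Cabs (Cmul z w) = Cabs z * Cabs w.
Proof.
  destruct z as [a b], w as [c d]; unfold Cabs, Cmul; simpl.
  rewrite <- sqrt_mult by nra. f_equal; ring.
Qed.

Lemma Cabs_triangle z w : Cabs (Cadd z w) <= Cabs z + Cabs w.
Proof.
  destruct z as [a b], w as [c d]; unfold Cabs, Cadd; simpl.
  set (s1 := sqrt (a*a+b*b)). set (s2 := sqrt (c*c+d*d)).
  assert (H1 : s1 * s1 = a*a+b*b) by (apply sqrt_sqrt; nra).
  assert (H2 : s2 * s2 = c*c+d*d) by (apply sqrt_sqrt; nra).
  assert (P1 : 0 <= s1) by apply sqrt_pos.
  assert (P2 : 0 <= s2) by apply sqrt_pos.
  clearbody s1 s2.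
  assert (K : a*c + b*d <= s1 * s2).
  { assert (E : (s1*s2)*(s1*s2) = (a*c+b*d)*(a*c+b*d) + (a*d-b*c)*(a*d-b*c)) by (
      replace ((s1*s2)*(s1*s2)) with ((s1*s1)*(s2*s2)) by ring; rewrite H1, H2; ring).
    destruct (Rle_or_lt (a*c+b*d) (s1*s2)) as [h|h]; auto.
    assert (0 <= s1*s2) by nra.
    assert (0 <= (a*d-b*c)*(a*d-b*c)) by (pose proof (Rle_0_sqr (a*d-b*c)); unfold Rsqr in *; lra).
    assert (0 < (a*c+b*d - s1*s2)*(a*c+b*d + s1*s2)) by (apply Rmult_lt_0_compat; [lra|lra]).
    nra. }
  rewrite <- (sqrt_square (s1 + s2)) by lra.
  apply sqrt_le_1_alt. nra.
Qed.

Lemma Cabs_opp z : Cabs (Copp z) = Cabs z.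
Proof. destruct z; unfold Cabs, Copp; simpl; f_equal; ring. Qed.

Lemma Cabs_sub z w : Cabs (Csub z w) <= Cabs z + Cabs w.
Proof. unfold Csub. rewrite <- (Cabs_opp w). apply Cabs_triangle. Qed.

Lemma Csq0 z : Cmul z z = C0 -> z = C0.
Proof.
  destruct z as [a b]; unfold Cmul, C0; simpl; intro H; injection H; intros.
  assert (Hab : a*b = 0) by lra. assert (Ha2 : a*a = b*b) by lra.
  assert (Ha : a*a = 0).
  { assert (E : (a*b)*(a*b) = (a*a)*(b*b)) by ring. rewrite Hab, <- Ha2 in E.
    assert (E2 : (a*a)*(a*a) = 0) by lra.
    apply Rmult_integral in E2; tauto. }
  assert (a = 0) by (apply Rmult_integral in Ha; tauto).
  assert (b = 0) by (rewrite Ha in Ha2; symmetry in Ha2; apply Rmult_integral in Ha2; tauto).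
  subst. f_equal; ring.
Qed.

Section BA.
Variable X : BanachAlgebra.

Lemma addx0 (x : X) : ba_add x ba_zero = x.
Proof. rewrite ba_addC; apply ba_add0. Qed.

Lemma idem0 (y : X) : ba_add y y = y -> y = ba_zero.
Proof.
  intro H. transitivity (ba_add (ba_add y y) (ba_opp y)).
  - rewrite <- ba_addA, ba_addN, addx0. reflexivity.
  - rewrite H. apply ba_addN.
Qed.

Lemma mul0l (x : X) : ba_mul ba_zero x = ba_zero.
Proof. apply idem0. rewrite <- ba_mulDl, ba_add0. reflexivity. Qed.
Lemma mul0r (x : X) : ba_mul x ba_zero = ba_zero.
Proof. apply idem0. rewrite <- ba_mulDr, ba_add0. reflexivity. Qed.
Lemma scal0 c : ba_scal c (@ba_zero X) = ba_zero.
Proof. apply idem0. rewrite <- ba_scalDr, ba_add0. reflexivity. Qed.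
Lemma norm0 : ba_norm (@ba_zero X) = 0.
Proof.
  pose proof (ba_norm_scal X C0 ba_zero) as H. rewrite scal0 in H.
  unfold Cabs, C0 in H; simpl in H.
  replace (0*0+0*0) with 0 in H by ring. rewrite sqrt_0 in H. lra.
Qed.
End BA.

Lemma theta0 (A B : BanachAlgebra) (theta : A -> B) :
  contractive_hom A B theta -> theta ba_zero = ba_zero.
Proof.
  intros [Ha _]. apply idem0. rewrite <- Ha, ba_add0. reflexivity.
Qed.

Lemma bound_pos {X : Type} (norm : X -> R) (P : X -> Prop) (f : X -> Cplx) M :
  (forall x, 0 <= norm x) -> (forall x, P x -> Cabs (f x) <= M * norm x) ->
  exists M', 0 <= M' /\ forall x, P x -> Cabs (f x) <= M' * norm x.
Proof.
  intros Hn H. exists (Rabs M). split; [apply Rabs_pos|].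
  intros x Px. specialize (H x Px). specialize (Hn x).
  pose proof (Rle_abs M). nra.
Qed.

Lemma vanish (B : BanachAlgebra) (I : B -> Prop) (HI : closed_ideal B I) :
  weakly_amenable_on (@ba_add B) (@ba_scal B) (@ba_mul B) (@ba_norm B) I ->
  forall psi : B -> Cplx,
  bounded_functional_on (@ba_add B) (@ba_scal B) (@ba_norm B) I psi ->
  (forall i j, I i -> I j -> psi (ba_mul i j) = C0) ->
  forall i, I i -> psi i = C0.
Proof.
  intros WI psi [Hadd [Hscal [M0 HM0]]] Hprod.
  destruct (bound_pos (@ba_norm B) I psi M0 (ba_norm_ge0 B) HM0) as [M [HMp HM]].
  destruct (WI (fun x y => Cmul (psi x) (psi y))) as [f [_ Hf]].
  - split; [|split; [|split; [|split]]].
    + intros a Ia. split; [|split].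
      * intros x y Ix Iy. rewrite Hadd by auto. cring.
      * intros c x Ix. rewrite Hscal by auto. cring.
      * exists (Cabs (psi a) * M). intros x Ix. rewrite Cabs_mul.
        rewrite Rmult_assoc. apply Rmult_le_compat_l; [apply Cabs_ge0|auto].
    + intros a a' b Ia Ia' Ib. rewrite Hadd by auto. cring.
    + intros c a b Ia Ib. rewrite Hscal by auto. cring.
    + exists (M * M). intros a b Ia Ib. rewrite Cabs_mul.
      pose proof (HM a Ia). pose proof (HM b Ib).
      pose proof (Cabs_ge0 (psi a)). pose proof (Cabs_ge0 (psi b)).
      replace (M * M * ba_norm a * ba_norm b) with ((M * ba_norm a) * (M * ba_norm b)) by ring.
      apply Rmult_le_compat; auto.
    + intros a b c Ia Ib Ic. destruct HI as [_ [_ [_ [HL HR]]]].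
      rewrite !Hprod by auto. cring.
  - intros i Ii. apply Csq0. specialize (Hf i i Ii Ii). simpl in Hf. rewrite Hf. cring.
Qed.

Section Pairs.
Variables (A B : BanachAlgebra) (theta : A -> B).
Hypothesis th0 : theta ba_zero = ba_zero.

Lemma pA (x y : A) : (ba_add x y, @ba_zero B) = amal_add (x, ba_zero) (y, ba_zero).
Proof. unfold amal_add; simpl; rewrite ba_add0; reflexivity. Qed.
Lemma pI (i j : B) : (@ba_zero A, ba_add i j) = amal_add (ba_zero, i) (ba_zero, j).
Proof. unfold amal_add; simpl; rewrite ba_add0; reflexivity. Qed.
Lemma sA c (x : A) : (ba_scal c x, @ba_zero B) = amal_scal c (x, ba_zero).
Proof. unfold amal_scal; simpl; rewrite scal0; reflexivity. Qed.
Lemma sI c (i : B) : (@ba_zero A, ba_scal c i) = amal_scal c (ba_zero, i).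
Proof. unfold amal_scal; simpl; rewrite scal0; reflexivity. Qed.
Lemma psplit (a : A) (i : B) : (a, i) = amal_add (a, ba_zero) (ba_zero, i).
Proof. unfold amal_add; simpl; rewrite ba_add0, addx0; reflexivity. Qed.
Lemma mAA (a a' : A) : amal_mul theta (a, ba_zero) (a', ba_zero) = (ba_mul a a', ba_zero).
Proof. unfold amal_mul; simpl; rewrite !mul0r, !mul0l, !ba_add0; reflexivity. Qed.
Lemma mII (i j : B) : amal_mul theta (ba_zero, i) (ba_zero, j) = (ba_zero, ba_mul i j).
Proof. unfold amal_mul; simpl; rewrite th0, !mul0r, !mul0l, !ba_add0; reflexivity. Qed.
Lemma mAI (a : A) (i : B) : amal_mul theta (a, ba_zero) (ba_zero, i) = (ba_zero, ba_mul (theta a) i).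
Proof. unfold amal_mul; simpl; rewrite th0, !mul0r, !mul0l, !addx0; reflexivity. Qed.
Lemma mIA (a : A) (j : B) : amal_mul theta (ba_zero, j) (a, ba_zero) = (ba_zero, ba_mul j (theta a)).
Proof. unfold amal_mul; simpl; rewrite th0, !mul0r, !mul0l, ba_add0, addx0; reflexivity. Qed.
Lemma nA (a : A) : amal_norm (a, @ba_zero B) = ba_norm a.
Proof. unfold amal_norm; simpl; rewrite norm0; ring. Qed.
Lemma nI (i : B) : amal_norm (@ba_zero A, i) = ba_norm i.
Proof. unfold amal_norm; simpl; rewrite norm0; ring. Qed.
End Pairs.

Lemma Csub_eq0 x y : Csub x y = C0 -> x = y.
Proof.
  intro E. assert (E1 := f_equal Cre E). assert (E2 := f_equal Cim E).
  unfold Csub, Cadd, Copp, C0 in *; simpl in *. apply Cext; lra.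
Qed.

Theorem proposition6p3 (A B : BanachAlgebra) (theta : A -> B)
  (Htheta : contractive_hom A B theta) (I : B -> Prop) (HI : closed_ideal B I) :
  weakly_amenable A ->
  weakly_amenable_on (@ba_add B) (@ba_scal B) (@ba_mul B) (@ba_norm B) I ->
  weakly_amenable_on (@amal_add A B) (@amal_scal A B) (amal_mul theta)
    (@amal_norm A B) (fun p => I (snd p)).
Proof.
  intros WA WI D [HDf [HDadd [HDscal [[M0 HM0] HDder]]]].
  pose proof (theta0 A B theta Htheta) as th0.
  pose proof HI as HI'.
  destruct Htheta as [Tadd [Tscal [Tmul Tnorm]]].
  destruct HI as [I0 [Iadd [Iscal [IL [IR _]]]]].
  assert (HM : exists M, 0 <= M /\ forall x y, I (snd x) -> I (snd y) ->
            Cabs (D x y) <= M * amal_norm x * amal_norm y).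
  { exists (Rabs M0). split; [apply Rabs_pos|]. intros x y Px Py.
    specialize (HM0 x y Px Py).
    assert (0 <= amal_norm x * amal_norm y) by (unfold amal_norm; apply Rmult_le_pos;
      apply Rplus_le_le_0_compat; apply ba_norm_ge0).
    rewrite Rmult_assoc in *. eapply Rle_trans; [exact HM0|].
    apply Rmult_le_compat_r; auto. apply Rle_abs. }
  clear M0 HM0. destruct HM as [M [HMp HM]].
  assert (Dadd2 : forall x y z, I (snd x) -> I (snd y) -> I (snd z) ->
            D x (amal_add y z) = Cadd (D x y) (D x z)).
  { intros x y z Px Py Pz. destruct (HDf x Px) as [F _]. apply F; auto. }
  assert (Dscal2 : forall c x y, I (snd x) -> I (snd y) ->
            D x (amal_scal c y) = Cmul c (D x y)).
  { intros c x y Px Py. destruct (HDf x Px) as [_ [F _]]. apply F; auto. }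
  destruct (WA (fun a a' => D (a, ba_zero) (a', ba_zero))) as [h [[Hhadd [Hhscal [Mh0 HMh0]]] Hh]].
  { split; [|split; [|split; [|split]]].
    - intros a _. split; [|split].
      + intros x y _ _. cbv beta. rewrite (pA A B). apply Dadd2; exact I0.
      + intros c x _. cbv beta. rewrite (sA A B). apply Dscal2; exact I0.
      + exists (M * ba_norm a). intros x _. cbv beta.
        pose proof (HM (a,ba_zero) (x,ba_zero) I0 I0) as H. rewrite !nA in H. exact H.
    - intros a a' b _ _ _. cbv beta. rewrite (pA A B). apply HDadd; exact I0.
    - intros c a b _ _. cbv beta. rewrite (sA A B). apply HDscal; exact I0.
    - exists M. intros a b _ _. cbv beta.
      pose proof (HM (a,ba_zero) (b,ba_zero) I0 I0) as H. rewrite !nA in H. exact H.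
    - intros a b c _ _ _. cbv beta. rewrite <- (mAA A B theta a b).
      rewrite HDder by exact I0. rewrite !(mAA A B theta). reflexivity. }
  assert (hE : forall a a', D (a, ba_zero) (a', ba_zero) = Csub (h (ba_mul a' a)) (h (ba_mul a a'))).
  { intros a a'. exact (Hh a a' Logic.I Logic.I). }
  clear Hh.
  destruct (bound_pos (@ba_norm A) (fun _ => True) h Mh0 (ba_norm_ge0 A) HMh0) as [Mh [HMhp HMh]].
  destruct (WI (fun i j => D (ba_zero, i) (ba_zero, j))) as [g [[Hgadd [Hgscal [Mg0 HMg0]]] Hg]].
  { split; [|split; [|split; [|split]]].
    - intros i Ii. split; [|split].
      + intros x y Ix Iy. cbv beta. rewrite (pI A B). apply Dadd2; assumption.
      + intros c x Ix. cbv beta. rewrite (sI A B). apply Dscal2; assumption.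
      + exists (M * ba_norm i). intros x Ix. cbv beta.
        pose proof (HM (ba_zero,i) (ba_zero,x) Ii Ix) as H. rewrite !nI in H. exact H.
    - intros i i' j Ii Ii' Ij. cbv beta. rewrite (pI A B). apply HDadd; assumption.
    - intros c i j Ii Ij. cbv beta. rewrite (sI A B). apply HDscal; assumption.
    - exists M. intros i j Ii Ij. cbv beta.
      pose proof (HM (ba_zero,i) (ba_zero,j) Ii Ij) as H. rewrite !nI in H. exact H.
    - intros i j k Ii Ij Ik. cbv beta. rewrite <- (mII A B theta th0 i j).
      rewrite HDder by assumption. rewrite !(mII A B theta th0). reflexivity. }
  assert (gE : forall i j, I i -> I j ->
            D (ba_zero, i) (ba_zero, j) = Csub (g (ba_mul j i)) (g (ba_mul i j))).
  { intros i j Ii Ij. exact (Hg i j Ii Ij). }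
  clear Hg.
  destruct (bound_pos (@ba_norm B) I g Mg0 (ba_norm_ge0 B) HMg0) as [Mg [HMgp HMg]].
  assert (gb1 : forall x y, I y -> Cabs (g (ba_mul (theta x) y)) <= Mg * ba_norm x * ba_norm y).
  { intros x y Iy. eapply Rle_trans; [apply HMg; auto|]. rewrite Rmult_assoc.
    apply Rmult_le_compat_l; auto. eapply Rle_trans; [apply ba_norm_mul|].
    apply Rmult_le_compat_r; [apply ba_norm_ge0|auto]. }
  assert (gb2 : forall x y, I y -> Cabs (g (ba_mul y (theta x))) <= Mg * ba_norm x * ba_norm y).
  { intros x y Iy. eapply Rle_trans; [apply HMg; auto|]. rewrite Rmult_assoc.
    apply Rmult_le_compat_l; auto. eapply Rle_trans; [apply ba_norm_mul|].
    rewrite Rmult_comm. apply Rmult_le_compat_r; [apply ba_norm_ge0|auto]. }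
  assert (C3 : forall a i, I i ->
    D (ba_zero, i) (a, ba_zero) = Csub (g (ba_mul (theta a) i)) (g (ba_mul i (theta a)))).
  { intros a i Ii. apply Csub_eq0.
    refine (vanish B I HI' WI
      (fun i => Csub (D (ba_zero, i) (a, ba_zero)) (Csub (g (ba_mul (theta a) i)) (g (ba_mul i (theta a))))) _ _ i Ii).
    - split; [|split].
      + intros x y Ix Iy. cbv beta. rewrite (pI A B).
        rewrite HDadd by (simpl; auto). rewrite ba_mulDr, ba_mulDl.
        rewrite !Hgadd by auto. cring.
      + intros c x Ix. cbv beta. rewrite (sI A B). rewrite HDscal by (simpl; auto).
        rewrite <- ba_scal_mulr, <- ba_scal_mull. rewrite !Hgscal by auto. cring.
      + exists (M * ba_norm a + Mg * ba_norm a + Mg * ba_norm a). intros x Ix. cbv beta.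
        pose proof (HM (ba_zero, x) (a, ba_zero) Ix I0) as H1. rewrite nI, nA in H1.
        pose proof (gb1 a x Ix). pose proof (gb2 a x Ix).
        pose proof (Cabs_sub (D (ba_zero, x) (a, ba_zero)) (Csub (g (ba_mul (theta a) x)) (g (ba_mul x (theta a))))).
        pose proof (Cabs_sub (g (ba_mul (theta a) x)) (g (ba_mul x (theta a)))).
        lra.
    - intros x y Ix Iy. cbv beta.
      pose proof (HDder (ba_zero, x) (ba_zero, y) (a, ba_zero) Ix Iy I0) as E.
      rewrite (mII A B theta th0 x y), (mAI A B theta th0 a x), (mIA A B theta th0 a y) in E.
      rewrite E. rewrite !gE by auto. rewrite !ba_mulA. cring. }
  assert (C4 : forall a j, I j ->
    D (a, ba_zero) (ba_zero, j) = Csub (g (ba_mul j (theta a))) (g (ba_mul (theta a) j))).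
  { intros a j Ij. apply Csub_eq0.
    refine (vanish B I HI' WI
      (fun j => Csub (D (a, ba_zero) (ba_zero, j)) (Csub (g (ba_mul j (theta a))) (g (ba_mul (theta a) j)))) _ _ j Ij).
    - split; [|split].
      + intros x y Ix Iy. cbv beta. rewrite (pI A B).
        rewrite Dadd2 by (simpl; auto). rewrite ba_mulDr, ba_mulDl.
        rewrite !Hgadd by auto. cring.
      + intros c x Ix. cbv beta. rewrite (sI A B). rewrite Dscal2 by (simpl; auto).
        rewrite <- ba_scal_mulr, <- ba_scal_mull. rewrite !Hgscal by auto. cring.
      + exists (M * ba_norm a + Mg * ba_norm a + Mg * ba_norm a). intros x Ix. cbv beta.
        pose proof (HM (a, ba_zero) (ba_zero, x) I0 Ix) as H1. rewrite nI, nA in H1.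
        pose proof (gb1 a x Ix). pose proof (gb2 a x Ix).
        pose proof (Cabs_sub (D (a, ba_zero) (ba_zero, x)) (Csub (g (ba_mul x (theta a))) (g (ba_mul (theta a) x)))).
        pose proof (Cabs_sub (g (ba_mul x (theta a))) (g (ba_mul (theta a) x))).
        lra.
    - intros x y Ix Iy. cbv beta.
      pose proof (HDder (a, ba_zero) (ba_zero, x) (ba_zero, y) I0 Ix Iy) as E.
      rewrite (mII A B theta th0 x y), (mAI A B theta th0 a x), (mIA A B theta th0 a y) in E.
      rewrite !gE in E by auto. repeat rewrite ba_mulA in E. repeat rewrite ba_mulA.
      assert (E1 := f_equal Cre E). assert (E2 := f_equal Cim E).
      apply Cext; unfold Csub, Cadd, Copp, Cmul, C0 in *; simpl in *; lra. }
  exists (fun x => Cadd (h (fst x)) (g (snd x))). split.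
  - split; [|split].
    + intros [a i] [a' j] Pi Pj. simpl in *. unfold amal_add; simpl.
      rewrite Hhadd by trivial. rewrite Hgadd by auto. cring.
    + intros c [a i] Pi. simpl in *. unfold amal_scal; simpl.
      rewrite Hhscal by trivial. rewrite Hgscal by auto. cring.
    + exists (Mh + Mg). intros [a i] Pi. simpl in *. unfold amal_norm; simpl.
      pose proof (Cabs_triangle (h a) (g i)). pose proof (HMh a Logic.I). pose proof (HMg i Pi).
      assert (0 <= Mh * ba_norm i) by (apply Rmult_le_pos; auto; apply ba_norm_ge0).
      assert (0 <= Mg * ba_norm a) by (apply Rmult_le_pos; auto; apply ba_norm_ge0).
      lra.
  - intros [a i] [a' j] Pi Pj. simpl in Pi, Pj.
    assert (E1 := HDadd (a, ba_zero) (ba_zero, i) (a', j) I0 Pi Pj).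
    rewrite <- (psplit A B a i) in E1. rewrite E1.
    assert (E2 := Dadd2 (a, ba_zero) (a', ba_zero) (ba_zero, j) I0 I0 Pj).
    rewrite <- (psplit A B a' j) in E2. rewrite E2.
    assert (E3 := Dadd2 (ba_zero, i) (a', ba_zero) (ba_zero, j) Pi I0 Pj).
    rewrite <- (psplit A B a' j) in E3. rewrite E3.
    rewrite hE, (C4 a j Pj), (C3 a' i Pi), (gE i j Pi Pj).
    unfold amal_mul; simpl. rewrite !Hgadd by auto. cring.
Qed.
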